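(* Let $k_1,k_2$ be constants with $0<k_2\le 1$ and $8k_2^2+6k_1-3<0$. Let $J'=(z_w,z_w')$ be a nonempty open interval, let $r:J'\to\mathbb{R}$ be differentiable with $r(z)\neq 0$, $\dot r(z)<k_1$ and $|r(z)|<k_2$ for all $z\in J'$, and let $h:J'\to\mathbb{R}$ be differentiable with $\dot h(z)=1+h(z)^2-2r(z)h(z)$ on $J'$, having exactly one zero $z_*\in J'$. Let $G(z)=z-\dfrac{2h(z)}{2+h(z)^2-2r(z)h(z)}$. Then for every initial guess $z_0\in J'$ the iteration $z_{n+1}=G(z_n)$ is well defined and $(z_n)$ converges monotonically to $z_*$.
   Context: $\dot{}$ denotes differentiation with respect to $z$. ''Converges monotonically'' means all iterates lie in $J'$, the sequence is monotone, and its limit is $z_*$. *)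

(* Defs.v *)
From Stdlib Require Import Reals.
From Coquelicot Require Import Coquelicot.
Open Scope R_scope.

Definition Gmap (r h : R -> R) (z : R) : R :=
  z - 2 * h z / (2 + h z ^ 2 - 2 * r z * h z).

Definition Gden (r h : R -> R) (z : R) : R := 2 + h z ^ 2 - 2 * r z * h z.

Definition Giter (r h : R -> R) (z0 : R) (n : nat) : R := Nat.iter n (Gmap r h) z0.

(* Main.v *)
Require Import Defs.
From Stdlib Require Import Reals Lra Psatz.
From Coquelicot Require Import Coquelicot.
Open Scope R_scope.

Lemma G_deriv (r h : R -> R) z :
  ex_derive r z -> is_derive h z (1 + h z ^ 2 - 2 * r z * h z) ->
  Gden r h z <> 0 ->
  is_derive (Gmap r h) z
   (h z ^ 2 * (3 * h z ^ 2 - 8 * r z * h z + 2 + 4 * r z ^ 2 - 4 * Derive r z) / (Gden r h z) ^ 2).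
Proof.
  intros Hr Hh Hd. unfold Gden in *. unfold Gmap.
  assert (Eh : Derive h z = 1 + h z ^ 2 - 2 * r z * h z) by (apply is_derive_unique; auto).
  assert (Hh' : ex_derive h z) by (exists (1 + h z ^ 2 - 2 * r z * h z); auto).
  auto_derive.
  - repeat split; auto; match goal with |- ?a <> 0 => replace a with (2 + h z ^ 2 - 2 * r z * h z) by ring end; exact Hd.
  - change (Derive (fun x : R => h x) z) with (Derive h z).
    change (Derive (fun x : R => r x) z) with (Derive r z).
    rewrite Eh. field. match goal with |- ?a <> 0 => replace a with (2 + h z ^ 2 - 2 * r z * h z) by ring end; exact Hd.
Qed.

Theorem mainTheorem8
  (k1 k2 zw zw' : R) (r h : R -> R) (zs : R)
  (Hk2 : 0 < k2 <= 1)
  (Hk : 8 * k2 ^ 2 + 6 * k1 - 3 < 0)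
  (Hint : zw < zw')
  (Hr_diff : forall z, zw < z < zw' -> ex_derive r z)
  (Hr_ne0 : forall z, zw < z < zw' -> r z <> 0)
  (Hr_der : forall z, zw < z < zw' -> Derive r z < k1)
  (Hr_bd : forall z, zw < z < zw' -> Rabs (r z) < k2)
  (Hh : forall z, zw < z < zw' -> is_derive h z (1 + h z ^ 2 - 2 * r z * h z))
  (Hzs : zw < zs < zw')
  (Hhzs : h zs = 0)
  (Huniq : forall z, zw < z < zw' -> h z = 0 -> z = zs) :
  forall z0, zw < z0 < zw' ->
    (forall n, zw < Giter r h z0 n < zw') /\
    (forall n, Gden r h (Giter r h z0 n) <> 0) /\
    ((forall n, Giter r h z0 n <= Giter r h z0 (S n)) \/
     (forall n, Giter r h z0 (S n) <= Giter r h z0 n)) /\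
    is_lim_seq (Giter r h z0) zs.
Proof.
  intros z0 Hz0.
  set (J := fun z => zw < z < zw').
  assert (Hrb : forall z, J z -> r z < k2 /\ - k2 < r z).
  { intros z Hz. apply Rabs_def2. apply Hr_bd; exact Hz. }
  assert (Dpos : forall z, J z -> 0 < Gden r h z).
  { intros z Hz. destruct (Hrb z Hz). unfold Gden.
    assert (0 < (k2 - r z)*(k2 + r z)) by (apply Rmult_lt_0_compat; lra).
    assert (k2 * k2 <= 1) by nra. assert (r z * r z < 1) by nra. pose proof (Rle_0_sqr (h z - r z)); unfold Rsqr in *. nra. }
  assert (Gd : forall z, J z -> is_derive (Gmap r h) z
     (h z ^ 2 * (3 * h z ^ 2 - 8 * r z * h z + 2 + 4 * r z ^ 2 - 4 * Derive r z) / (Gden r h z) ^ 2)).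
  { intros z Hz. apply G_deriv; auto. specialize (Dpos z Hz). lra. }
  assert (Gdpos : forall z, J z ->
     0 <= h z ^ 2 * (3 * h z ^ 2 - 8 * r z * h z + 2 + 4 * r z ^ 2 - 4 * Derive r z) / (Gden r h z) ^ 2).
  { intros z Hz. destruct (Hrb z Hz). specialize (Hr_der z Hz). specialize (Dpos z Hz).
    assert (0 <= 3 * h z ^ 2 - 8 * r z * h z + 2 + 4 * r z ^ 2 - 4 * Derive r z).
    { assert (0 < (k2 - r z)*(k2 + r z)) by (apply Rmult_lt_0_compat; lra).
      assert (r z ^ 2 <= k2 ^ 2) by nra.
      pose proof (pow2_ge_0 (h z - 4/3 * r z)).
      replace (3 * h z ^ 2 - 8 * r z * h z + 2 + 4 * r z ^ 2 - 4 * Derive r z)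
        with (3 * (h z - 4/3 * r z) ^ 2 + 2 - 4/3 * r z ^ 2 - 4 * Derive r z) by field.
      pose proof (pow2_ge_0 k2). lra. }
    apply Rmult_le_pos.
    - apply Rmult_le_pos; nra.
    - left. apply Rinv_0_lt_compat. nra. }
  assert (Jbetween : forall x y c, J x -> J y -> Rmin x y <= c <= Rmax x y -> J c).
  { intros x y c Hx Hy Hc. unfold J in *.
    destruct Hc as [Hc1 Hc2]. unfold Rmin, Rmax in *.
    destruct (Rle_dec x y); split; lra. }
  assert (Gmono : forall x y, J x -> J y -> x <= y -> Gmap r h x <= Gmap r h y).
  { intros x y Hx Hy Hxy.
    destruct (MVT_gen (Gmap r h) x y (fun z => h z ^ 2 * (3 * h z ^ 2 - 8 * r z * h z + 2 + 4 * r z ^ 2 - 4 * Derive r z) / (Gden r h z) ^ 2)) as [c [Hc Ec]].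
    - intros c Hc. apply Gd. apply (Jbetween x y c Hx Hy). lra.
    - intros c Hc. apply continuity_pt_filterlim; apply (@ex_derive_continuous R_AbsRing R_NormedModule).
      eexists. apply Gd. apply (Jbetween x y c Hx Hy). lra.
    - assert (J c) by (apply (Jbetween x y c Hx Hy); lra).
      specialize (Gdpos c H). nra. }
  assert (hmono : forall x y, J x -> J y -> x < y -> h x < h y).
  { intros x y Hx Hy Hxy.
    destruct (MVT_gen h x y (fun z => 1 + h z ^ 2 - 2 * r z * h z)) as [c [Hc Ec]].
    - intros c Hc. apply Hh. apply (Jbetween x y c Hx Hy). lra.
    - intros c Hc. apply continuity_pt_filterlim; apply (@ex_derive_continuous R_AbsRing R_NormedModule).
      eexists. apply Hh. apply (Jbetween x y c Hx Hy). lra.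
    - assert (J c) by (apply (Jbetween x y c Hx Hy); lra).
      destruct (Hrb c H).
      assert (0 < (k2 - r c)*(k2 + r c)) by (apply Rmult_lt_0_compat; lra).
      assert (k2 * k2 <= 1) by nra. assert (r c * r c < 1) by nra.
      pose proof (Rle_0_sqr (h c - r c)); unfold Rsqr in *.
      assert (0 < 1 + h c ^ 2 - 2 * r c * h c) by nra.
      assert (0 < y - x) by lra.
      assert (0 < (1 + h c ^ 2 - 2 * r c * h c) * (y - x)) by (apply Rmult_lt_0_compat; lra).
      lra. }
  assert (Gzs : Gmap r h zs = zs).
  { unfold Gmap. rewrite Hhzs. unfold Rdiv. ring. }
  assert (Gdir : forall z, J z -> Gmap r h z - z = - (2 * h z) * / Gden r h z).
  { intros z Hz. unfold Gmap, Gden. unfold Rdiv. ring. }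
  assert (stepL : forall z, J z -> z <= zs -> z <= Gmap r h z <= zs).
  { intros z Hz Hle. split.
    - assert (h z <= 0).
      { destruct Hle as [Hlt|Heq]. - left. rewrite <- Hhzs. apply hmono; auto.
        - subst. lra. }
      specialize (Gdir z Hz). assert (0 < / Gden r h z) by (apply Rinv_0_lt_compat; auto). nra.
    - apply Rle_trans with (Gmap r h zs); [apply Gmono; auto | rewrite Gzs; lra]. }
  assert (stepR : forall z, J z -> zs <= z -> zs <= Gmap r h z <= z).
  { intros z Hz Hle. split.
    - apply Rle_trans with (Gmap r h zs); [rewrite Gzs; lra | apply Gmono; auto].
    - assert (0 <= h z).
      { destruct Hle as [Hlt|Heq]. - left. rewrite <- Hhzs. apply hmono; auto.
        - subst. lra. }
      specialize (Gdir z Hz). assert (0 < / Gden r h z) by (apply Rinv_0_lt_compat; auto). nra. }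
  assert (Gcont : forall l, J l -> filterlim (Gmap r h) (locally l) (locally (Gmap r h l))).
  { intros l Hl. apply (@ex_derive_continuous R_AbsRing R_NormedModule). eexists. apply Gd; auto. }
  assert (fixp : forall l, J l -> is_lim_seq (Giter r h z0) l -> l = zs).
  { intros l Hl Hu.
    assert (H1 : is_lim_seq (fun n => Gmap r h (Giter r h z0 n)) (Gmap r h l)).
    { exact (filterlim_comp _ _ _ (Giter r h z0) (Gmap r h) eventually (locally l) (locally (Gmap r h l)) Hu (Gcont l Hl)). }
    assert (H2 : is_lim_seq (fun n => Giter r h z0 (S n)) l) by (apply -> is_lim_seq_incr_1; exact Hu).
    change (is_lim_seq (fun n => Gmap r h (Giter r h z0 n)) l) in H2.
    apply is_lim_seq_unique in H1. apply is_lim_seq_unique in H2.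
    rewrite H1 in H2. injection H2 as H3.
    apply Huniq; auto.
    specialize (Gdir l Hl). rewrite H3 in Gdir.
    specialize (Dpos l Hl).
    assert (Hinv : / Gden r h l <> 0) by (apply Rinv_neq_0_compat; lra).
    assert (h l * / Gden r h l = 0) by lra.
    destruct (Rmult_integral _ _ H) as [E|E]; [exact E| contradiction]. }
  destruct (Rle_lt_dec z0 zs) as [Hle|Hlt].
  - assert (Inv : forall n, z0 <= Giter r h z0 n <= zs).
    { induction n as [|n IH]. - simpl. lra.
      - change (Giter r h z0 (S n)) with (Gmap r h (Giter r h z0 n)).
        assert (J (Giter r h z0 n)) by (unfold J in *; lra).
        destruct (stepL _ H (proj2 IH)). lra. }
    assert (InJ : forall n, J (Giter r h z0 n)) by (intros n; specialize (Inv n); unfold J in *; lra).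
    assert (Inc : forall n, Giter r h z0 n <= Giter r h z0 (S n)).
    { intros n. change (Giter r h z0 (S n)) with (Gmap r h (Giter r h z0 n)).
      apply (stepL _ (InJ n) (proj2 (Inv n))). }
    split; [exact InJ|]. split.
    { intros n. specialize (Dpos _ (InJ n)). lra. }
    split; [left; exact Inc|].
    destruct (ex_finite_lim_seq_incr _ zs Inc (fun n => proj2 (Inv n))) as [l Hl].
    assert (l <= zs).
    { pose proof (is_lim_seq_le _ (fun _ => zs) l zs (fun n => proj2 (Inv n)) Hl (is_lim_seq_const zs)). exact H. }
    assert (z0 <= l) by (apply (is_lim_seq_incr_compare _ l Hl Inc 0)).
    assert (J l) by (unfold J in *; lra).
    rewrite <- (fixp l H1 Hl). exact Hl.
  - assert (Inv : forall n, zs <= Giter r h z0 n <= z0).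
    { induction n as [|n IH]. - simpl. lra.
      - change (Giter r h z0 (S n)) with (Gmap r h (Giter r h z0 n)).
        assert (J (Giter r h z0 n)) by (unfold J in *; lra).
        destruct (stepR _ H (proj1 IH)). lra. }
    assert (InJ : forall n, J (Giter r h z0 n)) by (intros n; specialize (Inv n); unfold J in *; lra).
    assert (Dec : forall n, Giter r h z0 (S n) <= Giter r h z0 n).
    { intros n. change (Giter r h z0 (S n)) with (Gmap r h (Giter r h z0 n)).
      apply (stepR _ (InJ n) (proj1 (Inv n))). }
    split; [exact InJ|]. split.
    { intros n. specialize (Dpos _ (InJ n)). lra. }
    split; [right; exact Dec|].
    destruct (ex_finite_lim_seq_decr _ zs Dec (fun n => proj1 (Inv n))) as [l Hl].
    assert (zs <= l).
    { pose proof (is_lim_seq_le (fun _ => zs) _ zs l (fun n => proj1 (Inv n)) (is_lim_seq_const zs) Hl). exact H. }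
    assert (l <= z0) by (apply (is_lim_seq_decr_compare _ l Hl Dec 0)).
    assert (J l) by (unfold J in *; lra).
    rewrite <- (fixp l H1 Hl). exact Hl.
Qed.
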